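(* Let $C\in\mathbb R^{d\times d}$ satisfy Condition A, let $m\ge1$, and let $D^{(m)}\in F^{(m)}$ have a rank-1 decomposition $D^{(m)}=\sum_{k=1}^s\lambda_kv_k^{\otimes m}$ with $s$ equal to the symmetric rank of $D^{(m)}$, $\lambda_k\in\mathbb R$, $v_k\in\mathbb R^d$. Let $D^{(m)}(t)$, $t\ge0$, be the solution of $$\dot D^{(m)}_\alpha=-\sum_{j,l=1}^d\alpha_jC_{jl}\,D^{(m)}_{(\alpha^{(j-)})^{(l+)}},\qquad\alpha\in S^{(m)},$$ with $D^{(m)}(0)=D^{(m)}$. Then $$D^{(m)}(t)=\sum_{k=1}^s\lambda_k[v_k(t)]^{\otimes m},\qquad t>0,$$ where $v_k(t)\in\mathbb R^d$ solves $\dot v_k=-Cv_k$, $v_k(0)=v_k$. Moreover, $D^{(m)}(t)$ has symmetric rank $s$ for all $t>0$.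
   Context: $C_S=\frac12(C+C^T)$; Condition A: $C_S$ positive semi-definite and no non-trivial $C^T$-invariant subspace of $\ker C_S$. $F^{(m)}$ is the space of symmetric $m$-tensors over $\mathbb R^d$ (arrays $(A_{i_1\dots i_m})_{i_r\in\{1,\dots,d\}}$ invariant under permutations of indices). $S^{(m)}=\{\alpha\in\mathbb N_0^d:|\alpha|=m\}$; for $A\in F^{(m)}$ and $\alpha\in S^{(m)}$, $A_\alpha:=A_{i_1\dots i_m}$ for any index with $\#\{r:i_r=k\}=\alpha_k$ for all $k$. For $\alpha\in\mathbb N_0^d$: $\alpha^{(l\pm)}_j=\alpha_j$ ($j\ne l$), $\alpha^{(l\pm)}_l=(\alpha_l\pm1)_+$. $v^{\otimes m}$ is the tensor with entries $v_{i_1}\cdots v_{i_m}$. The symmetric rank of $A\in F^{(m)}$ is the minimal $s$ such that $A=\sum_{k=1}^s\lambda_kv_k^{\otimes m}$ with real $\lambda_k$ and $v_k\in\mathbb R^d$ (such decompositions always exist). *)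

(* Defs.v *)
From HB Require Import structures.
From mathcomp Require Import all_boot all_order all_algebra.
From mathcomp Require Import all_classical all_reals all_analysis.
Set Implicit Arguments.
Unset Strict Implicit.
Unset Printing Implicit Defensive.
Import Order.TTheory GRing.Theory Num.Theory.
Local Open Scope ring_scope.

Section Defs.
Variable R : realType.

Definition symS d (C : 'M[R]_d) : 'M[R]_d := 2%:R^-1 *: (C + C^T).

(* Vectors of R^d are written as row vectors x; the column
   vector C^T x^T corresponds to the row vector x *m C, and the kernel of
   the symmetric matrix C_S is the row kernel kermx C_S.  A subspace is the
   row space of a square matrix U; it is trivial iff U = 0. *)
Definition conditionA d (C : 'M[R]_d) : Prop :=
  (forall x : 'rV[R]_d, 0 <= (x *m symS C *m x^T) 0 0) /\
  (forall U : 'M[R]_d,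
      (U <= kermx (symS C))%MS -> (U *m C <= U)%MS -> U = 0).

Definition tensor d := seq 'I_d -> R.

Definition symtensor d (m : nat) (A : tensor d) : Prop :=
  (forall s, size s <> m -> A s = 0) /\
  (forall s t, perm_eq s t -> A s = A t).

Definition mindex d := 'I_d -> nat.
Definition in_S d (m : nat) (a : mindex d) : Prop := (\sum_(k < d) a k)%N = m.

Definition rep d (a : mindex d) : seq 'I_d :=
  flatten [seq nseq (a k) k | k <- enum 'I_d].

Definition tcoord d (A : tensor d) (a : mindex d) : R := A (rep a).

Definition incr d (a : mindex d) (l : 'I_d) : mindex d :=
  fun k => if k == l then (a k).+1 else a k.
Definition decr d (a : mindex d) (l : 'I_d) : mindex d :=
  fun k => if k == l then (a k).-1 else a k.

Definition tpow d (m : nat) (v : 'I_d -> R) : tensor d :=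
  fun s => if size s == m then \prod_(i <- s) v i else 0.

Definition decomp d (m s : nat) (lam : 'I_s -> R) (v : 'I_s -> 'I_d -> R)
  : tensor d := fun x => \sum_(k < s) lam k * tpow m (v k) x.

Definition has_symrank d (m : nat) (A : tensor d) (s : nat) : Prop :=
  (exists (lam : 'I_s -> R) (v : 'I_s -> 'I_d -> R), A = decomp m lam v) /\
  (forall s' (lam : 'I_s' -> R) (v : 'I_s' -> 'I_d -> R),
      A = decomp m lam v -> (s <= s')%N).

Definition tens_rhs d (C : 'M[R]_d) (A : tensor d) (a : mindex d) : R :=
  - \sum_(j < d) \sum_(l < d) (a j)%:R * C j l * tcoord A (incr (decr a j) l).

Definition vec_rhs d (C : 'M[R]_d) (v : 'I_d -> R) : 'I_d -> R :=
  fun i => - \sum_(j < d) C i j * v j.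

End Defs.

(* Main.v *)
Require Import Defs.
From HB Require Import structures.
From mathcomp Require Import all_boot all_order all_algebra.
From mathcomp Require Import all_classical all_reals all_analysis.
From mathcomp Require Import ring lra.
Import Order.TTheory GRing.Theory Num.Theory.
Import numFieldNormedType.Exports.
Local Open Scope classical_set_scope.
Local Open Scope ring_scope.
Set Implicit Arguments.
Unset Strict Implicit.
Section S.
Variable R : realType.
Lemma lin_der (c t : R) : is_derive t 1 (fun u : R => - (c * u)) (- c).
Proof.
have -> : (fun u : R => - (c * u)) = (- c) *: (@id R).
  by apply/funext => u; rewrite !fctE /= scaleNr.
apply: is_derive_eq. by rewrite scaler1.
Qed.
Lemma derive_cont (f : R -> R) (t : R) (df : R) : is_derive t 1 f df -> {for t, continuous f}.
Proof.
move=> H. apply: differentiable_continuous. apply/derivable1_diffP.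
exact: ex_derive.
Qed.

Lemma gron_step (c : R) (f df : R -> R) (a b : R) : 0 < a -> a <= b ->
 (forall t : R, 0 < t -> is_derive t 1 f (df t)) -> (forall t : R, 0 < t -> df t <= c * f t) ->
 f b * expR (- (c * b)) <= f a * expR (- (c * a)).
Proof.
move=> a0 ab hd hle.
set g := fun t => f t * expR (- (c * t)).
have hg : forall t : R, 0 < t -> is_derive t 1 g (f t * (expR (- (c * t)) * - c) + expR (- (c * t)) * df t).
  move=> t t0.
  have h1 : is_derive t 1 (fun u => expR (- (c * u))) (expR (- (c * t)) * - c).
    exact: (is_derive1_comp (is_derive_expR _) (lin_der c t)).
  have := is_deriveM (hd t t0) h1.
  by [].
have pos : forall x, x \in `[a, b] -> 0 < x.
  by move=> x; rewrite in_itv /= => /andP[ax _]; apply: lt_le_trans ax.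
have cg : {within `[a, b], continuous g}.
  apply: continuous_in_subspaceT => x; rewrite inE /= => xab. exact: (derive_cont (hg x (pos x xab))).
have [x xab] := MVT_segment ab (fun x xi => hg x (pos x (subset_itv_oo_cc xi))) cg.
rewrite -/(g b) -/(g a) => e.
rewrite -subr_le0 e. apply: mulr_le0_ge0; last by rewrite subr_ge0.
have x0 := pos x xab.
have := hle x x0. have := expR_gt0 (- (c * x)). nra.
Qed.

Lemma gron_fwd (K : R) (f df : R -> R) : 0 <= K ->
 (forall t : R, 0 < t -> is_derive t 1 f (df t)) -> (forall t : R, 0 < t -> df t <= K * f t) ->
 (forall t : R, 0 < t -> 0 <= f t) -> f x @[x --> (0:R)^'+] --> 0 ->
 forall t : R, 0 < t -> f t = 0.
Proof.
move=> K0 hd hle hpos hlim t t0.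
suff : f t * expR (- (K * t)) <= 0.
  have := expR_gt0 (- (K * t)). have := hpos t t0. move=> h1 h2 h3.
  apply/eqP; rewrite eq_le h1 andbT. nra.
apply/ler_addgt0Pr => e e0; rewrite add0r.
have H : \forall x \near (0:R)^'+, (0 < x /\ x < t) /\ `|0 - f x| < e.
  apply: filterI; last exact: cvgr_dist_lt hlim e e0.
  apply: filterI; [exact: nbhs_right_gt | exact: nbhs_right_lt].
have [x [[x0 xt] fx]] := filter_ex H.
apply: le_trans (gron_step x0 (ltW xt) hd hle) _.
rewrite sub0r normrN in fx.
have fx0 := hpos x x0.
have : expR (- (K * x)) <= 1 by rewrite expR_le1 oppr_le0 mulr_ge0 // ltW.
move: fx; rewrite ger0_norm // => fx ex.
apply: ltW. apply: le_lt_trans fx. rewrite -[X in _ <= X]mulr1. by apply: ler_wpM2l.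
Qed.

Lemma gron_bwd (K : R) (f df : R -> R) :
 (forall t : R, 0 < t -> is_derive t 1 f (df t)) -> (forall t : R, 0 < t -> - (K * f t) <= df t) ->
 (forall t : R, 0 < t -> 0 <= f t) ->
 forall a b : R, 0 < a -> a <= b -> f b = 0 -> f a = 0.
Proof.
move=> hd hle hpos a b a0 ab fb.
have hd' : forall t : R, 0 < t -> is_derive t 1 (fun u => - f u) (- df t).
  move=> t t0; exact: is_deriveN (hd t t0).
have hle' : forall t : R, 0 < t -> - df t <= (- K) * (- f t).
  move=> t t0; have := hle t t0; rewrite mulrNN; lra.
have := gron_step a0 ab hd' hle'. rewrite fb oppr0 mul0r.
have := expR_gt0 (- (- K * a)). have := hpos a a0. move=> h1 h2 h3.
apply/eqP; rewrite eq_le h1 andbT. nra.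
Qed.

Lemma is_derive_bigsum (I : Type) (r : seq I) (F : I -> R -> R) (dF : I -> R) (t : R) :
  (forall i, is_derive t 1 (F i) (dF i)) ->
  is_derive t 1 (fun u => \sum_(i <- r) F i u) (\sum_(i <- r) dF i).
Proof.
move=> hF; elim: r => [|x r IH].
  have -> : (fun u : R => \sum_(i <- [::]) F i u) = cst 0.
    by apply/funext => u; rewrite big_nil.
  rewrite big_nil; exact: is_derive_cst.
have -> : (fun u : R => \sum_(i <- x :: r) F i u) = F x + (fun u => \sum_(i <- r) F i u).
  by apply/funext => u; rewrite big_cons.
rewrite big_cons; exact: is_deriveD.
Qed.

Lemma sq_le_sum (I : finType) (W : I -> R) (b : I) : W b ^+ 2 <= \sum_c W c ^+ 2.
Proof.
rewrite (bigD1 b) //= lerDl; apply: sumr_ge0 => c _; exact: sqr_ge0.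
Qed.

Lemma energy (I P : finType) (W dW : I -> R -> R) (N : I -> P -> R) (g : I -> P -> I) (t : R) :
 (forall b, is_derive t 1 (W b) (dW b t)) -> (forall b p, 0 <= N b p) ->
 (forall b, `|dW b t| <= \sum_p N b p * `|W (g b p) t|) ->
 is_derive t 1 (fun u => \sum_b W b u ^+ 2) (\sum_b 2 * W b t * dW b t) /\
 `|\sum_b 2 * W b t * dW b t| <= (2 * \sum_b \sum_p N b p) * \sum_b W b t ^+ 2.
Proof.
move=> hd hN hb; split.
  apply: is_derive_bigsum => b /=.
  have -> : (fun u => W b u ^+ 2) = W b * W b by apply/funext => u; rewrite expr2.
  have h := is_deriveM (hd b) (hd b).
  apply: is_derive_eq.
  by rewrite /GRing.scale /= -mulrDl -mulr2n mulr_natl mulrnAl.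
set Q := \sum_b W b t ^+ 2.
apply: le_trans (ler_norm_sum _ _ _) _.
have -> : 2 * (\sum_b \sum_p N b p) * Q = \sum_b \sum_p 2 * N b p * Q.
  rewrite [2 * _]mulr_sumr [_ * Q]mulr_suml; apply: eq_bigr => b _.
  rewrite [2 * _]mulr_sumr [_ * Q]mulr_suml; apply: eq_bigr => p _. done.
apply: ler_sum => b _.
rewrite normrM normrM (ger0_norm (ler0n _ 2)).
apply: le_trans (ler_wpM2l _ (hb b)) _; first by apply: mulr_ge0.
rewrite mulr_sumr; apply: ler_sum => p _.
have h1 := sq_le_sum (fun c => W c t) b.
have h2 := sq_le_sum (fun c => W c t) (g b p).
rewrite -/Q /= in h1 h2.
rewrite -(real_normK (num_real (W b t))) in h1. rewrite -(real_normK (num_real (W (g b p) t))) in h2.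
have := hN b p. have := normr_ge0 (W b t). have := normr_ge0 (W (g b p) t).
move: h1 h2. set x := `|W b t|. set y := `|W (g b p) t|. move=> h1 h2 h3 h4 h5.
have hxy : x * y <= Q by nra.
have -> : 2 * x * (N b p * y) = 2 * N b p * (x * y) by ring.
apply: ler_wpM2l => //; apply: mulr_ge0 => //.
Qed.

Lemma is_derive_bigprod (I : eqType) (r : seq I) (F : I -> R -> R) (dF : I -> R) (t : R) :
  uniq r -> (forall i, is_derive t 1 (F i) (dF i)) ->
  is_derive t 1 (fun u => \prod_(i <- r) F i u)
    (\sum_(j <- r) dF j * \prod_(i <- r | i != j) F i t).
Proof.
move=> ur hF; elim: r ur => [|x r IH] /=.
  move=> _. have -> : (fun u : R => \prod_(i <- [::]) F i u) = cst 1.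
    by apply/funext => u; rewrite big_nil.
  rewrite big_nil; exact: is_derive_cst.
move=> /andP[xr ur].
have -> : (fun u : R => \prod_(i <- x :: r) F i u) = F x * (fun u => \prod_(i <- r) F i u).
  by apply/funext => u; rewrite big_cons.
apply: is_derive_eq; first exact: is_deriveM (hF x) (IH ur).
rewrite big_cons big_cons eqxx /=.
have -> : \prod_(i <- r | i != x) F i t = \prod_(i <- r) F i t.
  rewrite big_seq_cond [RHS]big_seq_cond; apply: eq_bigl => i.
  case ir: (i \in r) => //=; apply/negP => /eqP ix.
  by move: xr; rewrite -ix ir.
have -> : \sum_(j <- r) dF j * \prod_(i <- x :: r | i != j) F i t =
          \sum_(j <- r) F x t * (dF j * \prod_(i <- r | i != j) F i t).
  apply: eq_big_seq => j jr; rewrite big_cons.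
  have -> : (x != j) by apply/negP => /eqP xj; move: xr; rewrite xj jr.
  by rewrite mulrCA.
rewrite -mulr_sumr /GRing.scale /=. by rewrite addrC mulrC.
Qed.

Definition mono d (w : 'I_d -> R) (a : mindex d) : R := \prod_(i < d) w i ^+ a i.

Lemma mono_incr d (w : 'I_d -> R) (b : mindex d) l : mono w (incr b l) = w l * mono w b.
Proof.
rewrite /mono (bigD1 l) //= [in RHS](bigD1 l) //= /incr eqxx exprS -mulrA; congr (_ * (_ * _)).
by apply: eq_bigr => i /negbTE ->.
Qed.

Lemma mono_decr d (w : 'I_d -> R) (b : mindex d) j :
  mono w (decr b j) = w j ^+ (b j).-1 * \prod_(i < d | i != j) w i ^+ b i.
Proof.
rewrite /mono (bigD1 j) //= /decr eqxx; congr (_ * _).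
by apply: eq_bigr => i /negbTE ->.
Qed.

Lemma mono_derive d (C : 'M[R]_d) (w : R -> 'I_d -> R) (a : mindex d) (t : R) :
  (forall j, is_derive t 1 (fun u => w u j) (vec_rhs C (w t) j)) ->
  is_derive t 1 (fun u => mono (w u) a)
    (- \sum_(j < d) \sum_(l < d) (a j)%:R * C j l * mono (w t) (incr (decr a j) l)).
Proof.
move=> hw.
have hF : forall i, is_derive t 1 (fun u => w u i ^+ a i)
     (((a i)%:R * w t i ^+ (a i).-1) *: vec_rhs C (w t) i).
  move=> i.
  have -> : (fun u => w u i ^+ a i) = (fun u => w u i) ^+ a i.
    by apply/funext => u; rewrite exprfctE.
  exact: is_deriveX.
apply: is_derive_eq; first exact: (is_derive_bigprod (index_enum_uniq 'I_d) hF).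
rewrite -sumrN; apply: eq_big => // j _.
rewrite /vec_rhs /GRing.scale /= -!sumrN mulr_sumr mulr_suml; apply: eq_bigr => l _.
rewrite mono_incr mono_decr. ring.
Qed.

Lemma iter_mulE (x : R) n : iter n (GRing.mul x) 1 = x ^+ n.
Proof. by elim: n => [|n IH] //=; rewrite IH exprS. Qed.

Lemma prod_rep d (w : 'I_d -> R) (a : mindex d) : \prod_(i <- rep a) w i = mono w a.
Proof.
rewrite /rep big_flatten /= big_map /mono big_enum /=; apply: eq_big => // k _.
by rewrite big_nseq iter_mulE.
Qed.

Lemma size_rep d (a : mindex d) : size (rep a) = (\sum_(k < d) a k)%N.
Proof.
rewrite /rep size_flatten /shape -map_comp sumnE big_map big_enum /=.
by apply: eq_big => // k _; rewrite /= size_nseq.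
Qed.

Lemma count_rep d (a : mindex d) x : count_mem x (rep a) = a x.
Proof.
rewrite /rep count_flatten -map_comp sumnE big_map big_enum /= (bigD1 x) //= big1.
  by rewrite count_nseq /= eqxx mul1n addn0.
by move=> k kx; rewrite count_nseq /= (negbTE kx).
Qed.

Definition cnt d (s : seq 'I_d) : mindex d := fun k => count_mem k s.

Lemma perm_rep_cnt d (s : seq 'I_d) : perm_eq s (rep (cnt s)).
Proof.
by apply/allP => x _ /=; rewrite count_rep.
Qed.

Lemma in_S_cnt d (s : seq 'I_d) : in_S (size s) (cnt s).
Proof.
by rewrite /in_S -size_rep (perm_size (perm_rep_cnt s)).
Qed.

Lemma symtensor_eq d m (A B : tensor R d) : symtensor m A -> symtensor m B ->
  (forall a : mindex d, in_S m a -> tcoord A a = tcoord B a) -> A = B.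
Proof.
move=> [A0 Ap] [B0 Bp] h; apply/funext => s.
case: (eqVneq (size s) m) => [sm|sm]; last by rewrite A0 ?B0 //; apply/eqP.
rewrite (Ap _ _ (perm_rep_cnt s)) (Bp _ _ (perm_rep_cnt s)).
apply: h; rewrite -sm; exact: in_S_cnt.
Qed.

Lemma tpow_rep d m (w : 'I_d -> R) (a : mindex d) : in_S m a -> tpow m w (rep a) = mono w a.
Proof. by move=> h; rewrite /tpow size_rep h eqxx prod_rep. Qed.

Lemma decomp_sym d m n (lam : 'I_n -> R) (w : 'I_n -> 'I_d -> R) : symtensor m (decomp m lam w).
Proof.
split.
  move=> s sm; rewrite /decomp big1 // => k _.
  by rewrite /tpow (introF eqP sm) mulr0.
move=> s t st; rewrite /decomp; apply: eq_bigr => k _.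
by rewrite /tpow (perm_size st) (perm_big _ st).
Qed.

Lemma cvg_pow (T : Type) (F : set_system T) {FF : Filter F} (f : T -> R) (l : R) n :
  f x @[x --> F] --> l -> f x ^+ n @[x --> F] --> l ^+ n.
Proof.
move=> hf; elim: n => [|n IH].
  under eq_cvg do rewrite expr0. rewrite expr0. exact: cvg_cst.
under eq_cvg do rewrite exprS. rewrite exprS. exact: cvgM.
Qed.

Lemma mono_cvg (T : Type) (F : set_system T) {FF : Filter F} d (w : T -> 'I_d -> R) (w0 : 'I_d -> R) a :
  (forall i, w x i @[x --> F] --> w0 i) -> mono (w x) a @[x --> F] --> mono w0 a.
Proof.
move=> hw; rewrite /mono.
apply: (@cvg_big _ _ _ _ _ (@mul_continuous R) _ F _ _ _ FF) => i _.
exact: cvg_pow.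
Qed.

Lemma sum_cvg (T : Type) (F : set_system T) {FF : Filter F} (I : Type) (r : seq I) (f : I -> T -> R) (l : I -> R) :
  (forall i, f i x @[x --> F] --> l i) -> \sum_(i <- r) f i x @[x --> F] --> \sum_(i <- r) l i.
Proof.
move=> h. apply: (@cvg_big _ _ _ _ _ (@add_continuous R) _ F _ _ _ FF) => i _. exact: h.
Qed.

Lemma solve_lin s d (V V0 : 'I_s -> 'I_d -> R) :
 (forall c : 'I_s -> R, (forall j, \sum_k c k * V k j = 0) -> forall i, \sum_k c k * V0 k i = 0) ->
 exists P : 'I_d -> 'I_d -> R, forall k i, \sum_j P i j * V k j = V0 k i.
Proof.
move=> hker.
pose M : 'M[R]_(s, d) := \matrix_(k, j) V k j.
pose M0 : 'M[R]_(s, d) := \matrix_(k, j) V0 k j.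
have sub : (M0^T <= M^T)%MS.
  rewrite submxE; move: (cokermx M^T) (mulmx_coker M^T) => K hK.
  have h1 : K^T *m M0 = 0.
    apply/matrixP => r i; rewrite !mxE.
    under eq_bigr do rewrite !mxE.
    apply: (hker (fun k => K k r)) => j.
    have := congr1 (fun A : 'M[R]_(d, s) => A j r) hK; rewrite !mxE => e.
    apply: etrans e; apply: eq_bigr => k _; by rewrite !mxE mulrC.
  by apply/eqP; rewrite -[M0^T *m K]trmxK trmx_mul trmxK h1 trmx0.
have [D hD] := submxP sub.
exists (fun i j => D i j) => k i.
have := congr1 (fun A : 'M[R]_(d, s) => A i k) hD; rewrite !mxE => ->.
by apply: eq_bigr => j _; rewrite !mxE.
Qed.

Definition fseq d m (f : {ffun 'I_m -> 'I_d}) : seq 'I_d := [seq f r | r <- enum 'I_m].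

Lemma tpow_fseq d m (w : 'I_d -> R) (f : {ffun 'I_m -> 'I_d}) :
  tpow m w (fseq f) = \prod_(r < m) w (f r).
Proof.
rewrite /tpow /fseq size_map size_enum_ord eqxx big_map big_enum /=.
by apply: eq_big => // r _.
Qed.

Lemma transport d m n (P : 'I_d -> 'I_d -> R) (lam : 'I_n -> R) (w : 'I_n -> 'I_d -> R)
    (x : seq 'I_d) (x0 : 'I_d) :
  size x = m ->
  decomp m lam (fun k i => \sum_j P i j * w k j) x =
  \sum_(f : {ffun 'I_m -> 'I_d}) (\prod_(r < m) P (nth x0 x r) (f r)) * decomp m lam w (fseq f).
Proof.
move=> sx.
rewrite /decomp.
have -> : \sum_(k < n) lam k * tpow m (fun i => \sum_j P i j * w k j) x =
  \sum_(k < n) \sum_(f : {ffun 'I_m -> 'I_d}) lam k * ((\prod_(r < m) P (nth x0 x r) (f r)) * tpow m (w k) (fseq f)).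
  apply: eq_bigr => k _; rewrite -mulr_sumr; congr (_ * _).
  rewrite /tpow sx eqxx (big_nth x0) sx big_mkord bigA_distr_bigA /=.
  apply: eq_bigr => f _; rewrite big_split /=; congr (_ * _).
  by rewrite -/(tpow m (w k) (fseq f)) tpow_fseq.
rewrite exchange_big /=; apply: eq_bigr => f _.
rewrite mulr_sumr; apply: eq_bigr => k _; by rewrite mulrCA.
Qed.

Lemma is_derive_scal (c : R) (f : R -> R) (df t : R) :
  is_derive t 1 f df -> is_derive t 1 (fun u => c * f u) (c * df).
Proof.
move=> h.
have -> : (fun u => c * f u) = c *: f by apply/funext => u.
exact: is_deriveZ.
Qed.

Lemma sum_incr d (b : mindex d) l : (\sum_(k < d) incr b l k)%N = (\sum_(k < d) b k).+1.
Proof.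
rewrite (bigD1 l) //= [in RHS](bigD1 l) //= /incr eqxx -addSn; congr (_ + _)%N.
by apply: eq_bigr => i /negbTE ->.
Qed.

Lemma sum_decr d (b : mindex d) j : (0 < b j)%N -> ((\sum_(k < d) decr b j k).+1 = \sum_(k < d) b k)%N.
Proof.
move=> bj.
rewrite (bigD1 j) //= [in RHS](bigD1 j) //= /decr eqxx -addSn prednK //; congr (_ + _)%N.
by apply: eq_bigr => i /negbTE ->.
Qed.

Lemma in_S_id d m (a : mindex d) j l : in_S m a -> (0 < a j)%N -> in_S m (incr (decr a j) l).
Proof. by rewrite /in_S sum_incr => <- /sum_decr ->. Qed.

Lemma in_S_le d m (a : mindex d) i : in_S m a -> (a i <= m)%N.
Proof. by rewrite /in_S (bigD1 i) //= => <-; apply: leq_addr. Qed.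

Definition emb d m (b : {ffun 'I_d -> 'I_m.+1}) : mindex d := fun i => nat_of_ord (b i).
Definition toT d m (a : mindex d) : {ffun 'I_d -> 'I_m.+1} := [ffun i => inord (a i)].

Lemma emb_toT d m (a : mindex d) : in_S m a -> emb (toT m a) = a.
Proof.
move=> h; apply/funext => i; rewrite /emb /toT ffunE inordK //.
by rewrite ltnS; apply: in_S_le h.
Qed.

Lemma tcoord_E d m n (lam : 'I_n -> R) (w : 'I_n -> 'I_d -> R) (a : mindex d) :
  in_S m a -> tcoord (decomp m lam w) a = \sum_(k < n) lam k * mono (w k) a.
Proof. by move=> h; rewrite /tcoord /decomp; apply: eq_bigr => k _; rewrite tpow_rep. Qed.
End S.

Theorem theorem5p19 (R : realType) (d m s : nat) (C : 'M[R]_d)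
    (lam : 'I_s -> R) (v0 : 'I_s -> 'I_d -> R) (D0 : tensor R d)
    (D : R -> tensor R d) (v : 'I_s -> R -> 'I_d -> R) :
  conditionA C ->
  (1 <= m)%N ->
  symtensor m D0 ->
  D0 = decomp m lam v0 ->
  has_symrank m D0 s ->
  (forall t : R, 0 <= t -> symtensor m (D t)) ->
  D 0 = D0 ->
  (forall a : mindex d, in_S m a ->
     (forall t : R, 0 < t ->
        is_derive t 1 (fun u : R => tcoord (D u) a) (tens_rhs C (D t) a)) /\
     (tcoord (D x) a @[x --> (0:R)^'+] --> tcoord D0 a)) ->
  (forall k, v k 0 = v0 k) ->
  (forall k (i : 'I_d),
     (forall t : R, 0 < t ->
        is_derive t 1 (fun u : R => v k u i) (vec_rhs C (v k t) i)) /\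
     (v k x i @[x --> (0:R)^'+] --> v k 0 i)) ->
  forall t : R, 0 < t ->
    D t = decomp m lam (fun k => v k t) /\ has_symrank m (D t) s.
Proof.
move=> _ hm hsym0 hD0 hrank hsymD _ hODE hv0 hv.
pose E u := decomp m lam (fun k => v k u).
have Eder : forall a : mindex d, in_S m a -> forall t : R, 0 < t ->
    is_derive t 1 (fun u => tcoord (E u) a) (tens_rhs C (E t) a).
  move=> a ha t t0.
  have -> : (fun u => tcoord (E u) a) = (fun u => \sum_(k < s) lam k * mono (v k u) a).
    by apply/funext => u; rewrite /E tcoord_E.
  apply: is_derive_eq.
    apply: is_derive_bigsum => k; apply: is_derive_scal.
    apply: mono_derive => j. exact: ((hv k j).1 t t0).
  rewrite /tens_rhs.
  under eq_bigr do rewrite mulrN.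
  rewrite sumrN; congr (- _).
  under eq_bigr => k _ do rewrite mulr_sumr.
  rewrite exchange_big /=; apply: eq_bigr => j _.
  under eq_bigr => k _ do rewrite mulr_sumr.
  rewrite exchange_big /=; apply: eq_bigr => l _.
  case: (posnP (a j)) => aj.
    rewrite aj mul0r mul0r big1 // => k _; by rewrite mul0r mulr0.
  rewrite /E tcoord_E; last exact: in_S_id.
  by rewrite mulr_sumr; apply: eq_bigr => k _; rewrite mulrCA.
have Elim : forall a : mindex d, in_S m a ->
    tcoord (E x) a @[x --> (0:R)^'+] --> tcoord D0 a.
  move=> a ha.
  have -> : (fun x => tcoord (E x) a) = (fun x => \sum_(k < s) lam k * mono (v k x) a).
    by apply/funext => u; rewrite /E tcoord_E.
  rewrite hD0 tcoord_E //.
  apply: sum_cvg => k. apply: cvgMl_tmp. apply: mono_cvg => i.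
  by rewrite -hv0; exact: (hv k i).2.
have DE : forall t : R, 0 < t -> D t = E t.
  pose T := {ffun 'I_d -> 'I_m.+1}.
  pose inS (b : T) := ((\sum_(k < d) emb b k)%N == m).
  pose W (b : T) (u : R) := if inS b then tcoord (D u) (emb b) - tcoord (E u) (emb b) else 0.
  pose dW (b : T) (u : R) := if inS b then tens_rhs C (D u) (emb b) - tens_rhs C (E u) (emb b) else 0.
  pose N (b : T) (p : 'I_d * 'I_d) := (emb b p.1)%:R * `|C p.1 p.2|.
  pose g (b : T) (p : 'I_d * 'I_d) := toT m (incr (decr (emb b) p.1) p.2).
  have Wder : forall u : R, 0 < u -> forall b, is_derive u 1 (W b) (dW b u).
    move=> u u0 b; rewrite /W /dW; case hb: (inS b).
      have ha : in_S m (emb b) by apply/eqP.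
      exact: is_deriveB ((hODE _ ha).1 u u0) (Eder _ ha u u0).
    exact: is_derive_cst.
  have WN : forall b p, 0 <= N b p by move=> b p; rewrite /N mulr_ge0.
  have Wbound : forall u : R, 0 < u -> forall b, `|dW b u| <= \sum_p N b p * `|W (g b p) u|.
    move=> u u0 b; rewrite /dW; case hb: (inS b); last first.
      by rewrite normr0 sumr_ge0 // => p _; rewrite mulr_ge0.
    have ha : in_S m (emb b) by apply/eqP.
    have -> : tens_rhs C (D u) (emb b) - tens_rhs C (E u) (emb b) =
      - \sum_(p : 'I_d * 'I_d) (emb b p.1)%:R * C p.1 p.2 *
          (tcoord (D u) (incr (decr (emb b) p.1) p.2) - tcoord (E u) (incr (decr (emb b) p.1) p.2)).
      rewrite /tens_rhs opprK addrC -opprB; congr (- _).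
      rewrite -(pair_bigA _ (fun j l => (emb b j)%:R * C j l * (tcoord (D u) (incr (decr (emb b) j) l) - tcoord (E u) (incr (decr (emb b) j) l)))) /= -sumrB; apply: eq_bigr => j _.
      rewrite -sumrB; apply: eq_bigr => l _. by rewrite mulrBr.
    rewrite normrN; apply: le_trans (ler_norm_sum _ _ _) _; apply: ler_sum => p _.
    rewrite /N normrM normrM (ger0_norm (ler0n _ _)) -mulrA -[X in _ <= X]mulrA.
    case: (posnP (emb b p.1)) => aj.
      by rewrite aj !mul0r.
    have hg : in_S m (incr (decr (emb b) p.1) p.2) by exact: in_S_id.
    rewrite /W /g /inS emb_toT // hg eqxx.
    done.
  pose K := 2 * \sum_b \sum_p N b p.
  have K0 : 0 <= K by rewrite /K mulr_ge0 // sumr_ge0 // => b _; rewrite sumr_ge0.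
  pose Q u := \sum_b W b u ^+ 2.
  pose dQ u := \sum_b 2 * W b u * dW b u.
  have Qz : forall u : R, 0 < u -> Q u = 0.
    apply: (@gron_fwd R K Q dQ K0).
    - move=> u u0; exact: (energy (Wder u u0) WN (Wbound u u0)).1.
    - move=> u u0; apply: le_trans (ler_norm _) _; exact: (energy (Wder u u0) WN (Wbound u u0)).2.
    - move=> u u0; apply: sumr_ge0 => b _; exact: sqr_ge0.
    - have H : forall b, W b x ^+ 2 @[x --> (0:R)^'+] --> (0:R) ^+ 2.
        move=> b; apply: cvg_pow.
      rewrite /W; case hb: (inS b); last exact: cvg_cst.
      have ha : in_S m (emb b) by apply/eqP.
      have := cvgB ((hODE _ ha).2) (Elim _ ha); rewrite subrr; exact.
      have HS := sum_cvg (r := index_enum T) H.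
      have e : \sum_(b <- index_enum T) (0:R) ^+ 2 = 0 by rewrite big1 // => b _; rewrite expr0n.
      rewrite e in HS; exact: HS.
  move=> t t0.
  have Wz : forall b, W b t = 0.
    move=> b; apply/eqP; rewrite -sqrf_eq0; apply/eqP.
    apply: (psumr_eq0P (F := fun b => W b t ^+ 2) _ (Qz t t0)) => // c _; exact: sqr_ge0.
  apply: symtensor_eq (hsymD t (ltW t0)) (decomp_sym _ _ _) _ => a ha.
  have := Wz (toT m a); rewrite /W /inS emb_toT // ha eqxx => /eqP.
  by rewrite subr_eq0 => /eqP.
move=> t t0.
have DEt := DE t t0.
split; first exact: DEt.
split; first by exists lam, (fun k => v k t).
move=> s' lam' w hw.
have ker : forall c : 'I_s -> R, (forall j, \sum_k c k * v k t j = 0) ->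
    forall i, \sum_k c k * v0 k i = 0.
  move=> c hc i0.
  pose u (i : 'I_d) (tau : R) := \sum_k c k * v k tau i.
  pose du (i : 'I_d) (tau : R) := - \sum_j C i j * u j tau.
  have uder : forall tau : R, 0 < tau -> forall i, is_derive tau 1 (u i) (du i tau).
    move=> tau tau0 i; rewrite /u; apply: is_derive_eq.
      apply: is_derive_bigsum => k; apply: is_derive_scal; exact: ((hv k i).1 tau tau0).
    rewrite /du /vec_rhs.
    under eq_bigr do rewrite mulrN.
    rewrite sumrN; congr (- _).
    under eq_bigr do rewrite mulr_sumr.
    rewrite exchange_big; apply: eq_bigr => j _; rewrite /u mulr_sumr; apply: eq_bigr => k _.
    by rewrite mulrCA.
  have ubound : forall tau : R, 0 < tau -> forall i,
      `|du i tau| <= \sum_j `|C i j| * `|u ((fun _ j => j) i j) tau|.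
    move=> tau tau0 i; rewrite /du normrN; apply: le_trans (ler_norm_sum _ _ _) _.
    by apply: ler_sum => j _; rewrite normrM.
  have uN : forall i j : 'I_d, 0 <= `|C i j| by move=> i j.
  pose K := 2 * \sum_(i : 'I_d) \sum_(j : 'I_d) `|C i j|.
  pose Q tau := \sum_(i : 'I_d) u i tau ^+ 2.
  pose dQ tau := \sum_(i : 'I_d) 2 * u i tau * du i tau.
  have Qz : forall tau : R, 0 < tau -> tau <= t -> Q tau = 0.
    move=> tau tau0 taut; apply: (@gron_bwd R K Q dQ _ _ _ tau t tau0 taut).
    - move=> r r0; exact: (energy (uder r r0) uN (ubound r r0)).1.
    - move=> r r0; have h := (energy (uder r r0) uN (ubound r r0)).2.
      by rewrite ler_norml in h; case/andP: h.
    - move=> r r0; apply: sumr_ge0 => i _; exact: sqr_ge0.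
    - by rewrite /Q big1 // => i _; rewrite /u hc expr2 mul0r.
  have uz : forall tau : R, 0 < tau -> tau <= t -> u i0 tau = 0.
    move=> tau tau0 taut; apply/eqP; rewrite -sqrf_eq0; apply/eqP.
    apply: (psumr_eq0P (F := fun i => u i tau ^+ 2) _ (Qz tau tau0 taut)) => // i _.
    exact: sqr_ge0.
  have h1 : u i0 x @[x --> (0:R)^'+] --> \sum_k c k * v0 k i0.
    apply: sum_cvg => k; apply: cvgMl_tmp; rewrite -hv0; exact: (hv k i0).2.
  have h2 : u i0 x @[x --> (0:R)^'+] --> 0.
    apply: cvg_near_cst.
    apply: filterS (filterI (nbhs_right_gt 0) (nbhs_right_lt t0)) => x [x0 xt].
    by apply: uz => //; exact: ltW.
  exact: (cvg_unique _ h1 h2).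
have [P hP] := solve_lin (V := fun k j => v k t j) (V0 := v0) ker.
have eD0 : D0 = decomp m lam' (fun k i => \sum_j P i j * w k j).
  apply/funext => x.
  case: (eqVneq (size x) m) => sx; last first.
    by rewrite hsym0.1 ?(decomp_sym _ _ _).1 //; apply/eqP.
  case: x sx => [|x0 x'] sx; first by move: hm; rewrite -sx.
  rewrite hD0.
  have -> : v0 = (fun k i => \sum_j P i j * v k t j).
    by apply/funext => k; apply/funext => i; rewrite hP.
  rewrite (transport _ _ _ x0 sx) (transport _ _ _ x0 sx).
  apply: eq_bigr => f _; congr (_ * _).
  by rewrite -hw DEt.
exact: hrank.2 s' lam' _ eD0.
Qed.
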